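(* Let $\phi$ be an IPC formula disjunctive in the variable $x$ and let $n$ be the cardinality of $\mathrm{Head}(\phi)$. Then for every Heyting algebra $H$ and valuation $v$ of the variables other than $x$, the map $F(h)=[\![\phi]\!]_{(v,h/x)}$ satisfies $\mu.F=F^{n+1}(\bot)$.
   Context: A formula is disjunctive in $x$ if it is generated by the grammar $\phi ::= x \mid \alpha\to\phi \mid \beta\vee\phi \mid \phi\vee\phi$, where $\alpha,\beta$ range over IPC formulas not containing $x$ (disjunctions up to commutativity). $\mathrm{Head}(\phi)$ is the set of formulas $\alpha$ used in productions $\alpha\to\phi'$ in the parse of $\phi$. $\mu.F$ is the least fixed point of $F$. *)

(* Defs.v *)
From HB Require Import structures.
From mathcomp Require Import all_boot all_order.
Set Implicit Arguments. Unset Strict Implicit. Unset Printing Implicit Defensive.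
Import Order.TTheory.
Local Open Scope order_scope.

Inductive form : Type :=
| Var of nat
| Bot
| Top
| And of form & form
| Or of form & form
| Imp of form & form.

Definition form_eq_dec (f g : form) : {f = g} + {f <> g}.
Proof. decide equality; exact: (fun m n : nat => eq_comparable m n). Defined.

HB.instance Definition _ := comparableMixin form_eq_dec.

Fixpoint occurs (x : nat) (f : form) : bool :=
  match f with
  | Var y => y == x
  | Bot | Top => false
  | And a b | Or a b | Imp a b => occurs x a || occurs x b
  end.

(* phi ::= x | alpha -> phi | beta \/ phi | phi \/ phi  (alpha, beta x-free;
   disjunction up to commutativity) *)
Inductive disjunctive (x : nat) : form -> Prop :=
| DVar : disjunctive x (Var x)
| DImp a p : ~~ occurs x a -> disjunctive x p -> disjunctive x (Imp a p)
| DOrL b p : ~~ occurs x b -> disjunctive x p -> disjunctive x (Or b p)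
| DOrR b p : ~~ occurs x b -> disjunctive x p -> disjunctive x (Or p b)
| DOr p q : disjunctive x p -> disjunctive x q -> disjunctive x (Or p q).

(* The heads alpha of productions alpha -> phi' in the (unique) parse of a
   formula disjunctive in x; x-free disjuncts beta are not descended into. *)
Fixpoint head (x : nat) (f : form) : seq form :=
  match f with
  | Imp a p => a :: head x p
  | Or a b => (if occurs x a then head x a else [::]) ++
              (if occurs x b then head x b else [::])
  | _ => [::]
  end.

Definition card_head (x : nat) (f : form) : nat := size (undup (head x f)).

Definition heyting_imp {d : Order.disp_t} (H : tbLatticeType d)
  (imp : H -> H -> H) : Prop :=
  forall a b c : H, (c `&` a <= b) = (c <= imp a b).

Fixpoint eval {d : Order.disp_t} (H : tbLatticeType d) (imp : H -> H -> H)
  (v : nat -> H) (f : form) : H :=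
  match f with
  | Var y => v y
  | Bot => \bot
  | Top => \top
  | And a b => eval imp v a `&` eval imp v b
  | Or a b => eval imp v a `|` eval imp v b
  | Imp a b => imp (eval imp v a) (eval imp v b)
  end.

Definition upd {T : Type} (v : nat -> T) (x : nat) (h : T) : nat -> T :=
  fun y => if y == x then h else v y.

Definition is_lfp {d : Order.disp_t} (H : porderType d) (F : H -> H) (a : H) : Prop :=
  F a = a /\ forall y, F y = y -> a <= y.

(* Main.v *)
Require Import Defs.
From HB Require Import structures.
From mathcomp Require Import all_boot all_order.
From mathcomp Require Import zify.
Import Order.TTheory.
Local Open Scope order_scope.
Set Implicit Arguments. Unset Strict Implicit.

Lemma cnt_lt (T : eqType) (p q : pred T) (s : seq T) (a : T) :
  (forall z, q z -> p z) -> a \in s -> p a -> ~~ q a ->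
  (count q s < count p s)%N.
Proof.
move=> qp; elim: s => // z s IH; rewrite inE => /orP[/eqP <- | hs] pa qa /=.
  rewrite pa (negbTE qa) add0n add1n ltnS; exact: sub_count.
have := IH hs pa qa; case: (q z) (qp z) => [->//|_]; case: (p z) => /=; lia.
Qed.

Definition meas (S A : seq form) : nat := count (fun s => s \notin A) (undup S).

Lemma meas_lt S A a : a \in S -> a \notin A -> (meas S (a :: A) < meas S A)%N.
Proof.
move=> aS aA; apply: cnt_lt (a) _ _ _ _ => //.
- by move=> z; rewrite inE negb_or => /andP[].
- by rewrite mem_undup.
- by rewrite inE eqxx.
Qed.

Lemma meas_le S A a : (meas S (a :: A) <= meas S A)%N.
Proof. by apply: sub_count => z /=; rewrite inE negb_or => /andP[]. Qed.

Lemma disj_occurs x p : disjunctive x p -> occurs x p.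
Proof.
elim=> //= [a p' _ _ h|b p' _ _ h|b p' _ _ h|p' q _ h _ _];
  by rewrite ?eqxx ?h ?orbT.
Qed.

Section Aux.
Variables (d : Order.disp_t) (H : tbLatticeType d) (imp : H -> H -> H)
  (himp : heyting_imp imp) (v : nat -> H) (x : nat).

Local Notation ev h f := (eval imp (upd v x h) f).

Lemma ev_free a h : ~~ occurs x a -> ev h a = eval imp v a.
Proof.
elim: a => //= [y|a IHa b IHb|a IHa b IHb|a IHa b IHb];
  try by rewrite negb_or => /andP[/IHa -> /IHb ->].
by rewrite /upd => /negbTE ->.
Qed.

Lemma imp_l a y : imp a y `&` a <= y.
Proof. by rewrite himp. Qed.
Lemma imp_r a y : y <= imp a y.
Proof. by rewrite -himp leIl. Qed.
Lemma imp_mono a y z : y <= z -> imp a y <= imp a z.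
Proof. by move=> yz; rewrite -himp; exact: le_trans (imp_l a y) yz. Qed.

Lemma splitc (c X Y G : H) : c <= X `|` Y -> c `&` X <= G -> c `&` Y <= G -> c <= G.
Proof.
move=> cXY cX cY.
have h : X `|` Y <= imp c G by rewrite leUx -!himp ![_ `&` c]meetC cX cY.
by have := le_trans cXY h; rewrite -himp meetxx.
Qed.

Lemma infl p y : disjunctive x p -> y <= ev y p.
Proof.
elim=> /= [|a p' _ _ IH|b p' _ _ IH|b p' _ _ IH|p' q _ IHp _ IHq].
- by rewrite /upd eqxx.
- exact: le_trans IH (imp_r _ _).
- exact: le_trans IH (leUr _ _).
- exact: le_trans IH (leUl _ _).
- exact: le_trans IHp (leUl _ _).
Qed.

Lemma mono p y z : disjunctive x p -> y <= z -> ev y p <= ev z p.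
Proof.
move=> dp yz; elim: dp => /= [|a p' na _ IH|b p' nb _ IH|b p' nb _ IH|p' q _ IHp _ IHq].
- by rewrite /upd eqxx.
- rewrite (ev_free y na) (ev_free z na); exact: imp_mono.
- rewrite (ev_free y nb) (ev_free z nb); exact: leU2 (lexx _) IH.
- rewrite (ev_free y nb) (ev_free z nb); exact: leU2 IH (lexx _).
- exact: leU2 IHp IHq.
Qed.

Lemma sub (S : seq form) (y1 y2 : H) (P : seq form -> Prop)
  (Pmono : forall A a, P A -> P (a :: A))
  (hP : forall A a, P A -> a \in S -> a \notin A -> forall c,
      (forall b, b \in a :: A -> c <= eval imp v b) -> c <= y1 -> c <= y2) :
  forall p, disjunctive x p -> {subset Defs.head x p <= S} -> forall A, P A ->
  forall c, (forall b, b \in A -> c <= eval imp v b) ->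
  c <= ev y1 p -> c <= ev y2 p `|` y1.
Proof.
move=> p; elim=> {p} /= [|a p na dp IH|b p nb dp IH|b p nb dp IH|p q dp IHp dq IHq]
  hS A PA c cA.
- by rewrite /upd eqxx => h; exact: le_trans h (leUr _ _).
- rewrite !(ev_free _ na) // => hc.
  set c' := c `&` eval imp v a.
  have hc' : c' <= ev y1 p by rewrite /c' himp.
  have aS : a \in S by apply: hS; rewrite inE eqxx.
  have hS' : {subset Defs.head x p <= S} by move=> z hz; apply: hS; rewrite inE hz orbT.
  case: (boolP (a \in A)) => aA.
  + have h1 := IH hS' A PA c' (fun b hb => le_trans (leIl _ _) (cA b hb)) hc'.
    have cc' : c <= c' by rewrite lexI lexx cA.
    apply: le_trans cc' (le_trans h1 _); exact: leU2 (imp_r _ _) (lexx _).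
  + have cA' : forall b, b \in a :: A -> c' <= eval imp v b.
      move=> b; rewrite inE => /orP[/eqP -> | hb]; first exact: leIr.
      exact: le_trans (leIl _ _) (cA b hb).
    have h1 := IH hS' (a :: A) (Pmono _ _ PA) c' cA' hc'.
    have h2 : c' <= ev y2 p.
      apply: (splitc h1); first exact: leIr.
      apply: le_trans (infl y2 dp); apply: (hP A a PA aS aA).
      * by move=> b hb; exact: le_trans (leIl _ _) (cA' b hb).
      * exact: leIr.
    apply: le_trans (leUl _ _); by rewrite -himp.
- rewrite (negbTE nb) (disj_occurs dp) /= in hS.
  rewrite !(ev_free _ nb) // => hc; apply: (splitc hc).
  + apply: le_trans (leIr _ _) _; exact: le_trans (leUl _ _) (leUl _ _).
  + have h := IH hS A PA _ (fun b hb => le_trans (leIl _ _) (cA b hb)) (leIr _ _).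
    apply: le_trans h _; exact: leU2 (leUr _ _) (lexx _).
- rewrite (negbTE nb) (disj_occurs dp) /= cats0 in hS.
  rewrite !(ev_free _ nb) // => hc; apply: (splitc hc).
  + have h := IH hS A PA _ (fun b hb => le_trans (leIl _ _) (cA b hb)) (leIr _ _).
    apply: le_trans h _; exact: leU2 (leUl _ _) (lexx _).
  + apply: le_trans (leIr _ _) _; exact: le_trans (leUr _ _) (leUl _ _).
- rewrite (disj_occurs dp) (disj_occurs dq) /= in hS.
  have hSp : {subset Defs.head x p <= S} by move=> z hz; apply: hS; rewrite mem_cat hz.
  have hSq : {subset Defs.head x q <= S} by move=> z hz; apply: hS; rewrite mem_cat hz orbT.
  move=> hc; apply: (splitc hc).
  + have h := IHp hSp A PA _ (fun b hb => le_trans (leIl _ _) (cA b hb)) (leIr _ _).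
    apply: le_trans h _; exact: leU2 (leUl _ _) (lexx _).
  + have h := IHq hSq A PA _ (fun b hb => le_trans (leIl _ _) (cA b hb)) (leIr _ _).
    apply: le_trans h _; exact: leU2 (leUr _ _) (lexx _).
Qed.

Lemma outer phi (dphi : disjunctive x phi) K : forall A,
  (meas (Defs.head x phi) A < K)%N -> forall m, (meas (Defs.head x phi) A < m)%N ->
  forall c, (forall b, b \in A -> c <= eval imp v b) ->
  c <= iter m.+1 (fun h => ev h phi) \bot -> c <= iter m (fun h => ev h phi) \bot.
Proof.
elim: K => // K IHK A hA [//|m] hm c cA hc.
have Pm : forall (A' : seq form) a, (meas (Defs.head x phi) A' <= K)%N && (meas (Defs.head x phi) A' <= m)%N ->
    (meas (Defs.head x phi) (a :: A') <= K)%N && (meas (Defs.head x phi) (a :: A') <= m)%N.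
  move=> A' a /andP[h1 h2]; have := meas_le (Defs.head x phi) A' a; lia.
have hP : forall (A' : seq form) a, (meas (Defs.head x phi) A' <= K)%N && (meas (Defs.head x phi) A' <= m)%N ->
    a \in Defs.head x phi -> a \notin A' -> forall c',
    (forall b, b \in a :: A' -> c' <= eval imp v b) ->
    c' <= iter m.+1 (fun h => ev h phi) \bot -> c' <= iter m (fun h => ev h phi) \bot.
  move=> A' a /andP[h1 h2] aS aA c' cA' hc'.
  have hlt := meas_lt aS aA.
  by apply: (IHK (a :: A')) => //; lia.
have h := @sub (Defs.head x phi) (iter m.+1 (fun h => ev h phi) \bot)
  (iter m (fun h => ev h phi) \bot)
  (fun A => (meas (Defs.head x phi) A <= K)%N && (meas (Defs.head x phi) A <= m)%N)
  Pm hP phi dphi (fun z hz => hz) A ltac:(apply/andP; split; lia) c cA hc.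
apply: le_trans h _; rewrite leUx; apply/andP; split=> //; exact: lexx.
Qed.

End Aux.

Theorem mainTheorem20 (x : nat) (phi : form) (hphi : disjunctive x phi)
  (d : Order.disp_t) (H : tbLatticeType d) (imp : H -> H -> H)
  (himp : heyting_imp imp) (v : nat -> H) :
  is_lfp (fun h : H => eval imp (upd v x h) phi)
         (iter (card_head x phi).+1 (fun h : H => eval imp (upd v x h) phi) \bot).
Proof.
have hm : meas (Defs.head x phi) [::] = card_head x phi.
  rewrite /meas /card_head -count_predT; apply: eq_count => s; by rewrite in_nil.
split.
- apply: le_anti; apply/andP; split.
  + apply: (outer himp hphi (K := (card_head x phi).+1) (A := [::])); rewrite ?hm //.
  + exact: infl.
- move=> y fy; elim: (card_head x phi).+1 => [|k IH] /=; first exact: le0x.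
  rewrite -fy; exact: mono hphi IH.
Qed.
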